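(* If $G$ is a split graph, then $\gamma_{\rm i}(G)=\alpha(G)$.
   Context: A graph is split if its vertex set can be partitioned into a clique and an independent set. $\alpha(G)$ is the independence number. Indicated domination game on $G$: two players, Dominator and Staller, alternate. In each round Dominator indicates a vertex $v$ not yet dominated by the vertices previously selected by Staller (a vertex dominates itself and its neighbors), and Staller must select a vertex of the closed neighborhood $N[v]$, adding it to a set $D$. The game ends when $D$ is a dominating set of $G$. Dominator wants to minimize $|D|$ and Staller to maximize it; the size of $D$ under optimal play of both is the indicated domination number $\gamma_{\rm i}(G)$. *)

(* Defs.v *)
(* A finite simple graph = symmetric irreflexive relation
   e on a finType T. *)
From mathcomp Require Import all_boot.
Set Implicit Arguments. Unset Strict Implicit. Unset Printing Implicit Defensive.

Section Graph.
Variables (T : finType) (e : rel T).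

Definition cnbhd (v : T) : {set T} := [set u | (u == v) || e v u].

Definition dominated (D : {set T}) (v : T) : bool := [exists u in D, u \in cnbhd v].

Definition dominating (D : {set T}) : bool := [forall v, dominated D v].

Definition is_clique (K : {set T}) : bool :=
  [forall x in K, forall y in K, (x != y) ==> e x y].

Definition is_independent (S : {set T}) : bool :=
  [forall x in S, forall y in S, ~~ e x y].

Definition is_split : Prop :=
  exists K I : {set T},
    [/\ K :|: I = setT, K :&: I = set0, is_clique K & is_independent I].

Definition alpha : nat := \max_(S : {set T} | is_independent S) #|S|.

(* Value of the indicated domination game from position D (the set of
   vertices already selected by Staller), with fuel n.  Dominator (min)
   indicates an undominated vertex v, Staller (max) selects u in N[v].
   Each move adds a new vertex to D, so fuel #|T| suffices; the minn
   default #|T| is never used since a non-dominating D leaves an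
   undominated vertex, and N[v] is nonempty. *)
Fixpoint game_value (n : nat) (D : {set T}) : nat :=
  match n with
  | 0 => #|D|
  | n'.+1 =>
      if dominating D then #|D|
      else \big[minn/#|T|]_(v | ~~ dominated D v)
             \max_(u in cnbhd v) game_value n' (u |: D)
  end.

Definition gamma_i : nat := game_value #|T| set0.

End Graph.

(* Main.v *)
Require Import Defs.
From mathcomp Require Import all_boot.
From mathcomp Require Import zify.
Set Implicit Arguments. Unset Strict Implicit.

Lemma bigmin_le (I : finType) (P : pred I) (F : I -> nat) d i0 :
  P i0 -> \big[minn/d]_(i | P i) F i <= F i0.
Proof.
move=> Pi0; have : i0 \in index_enum I by rewrite mem_index_enum.
elim: (index_enum I) => // a r IH; rewrite inE big_cons.
case/orP => [/eqP <-| ir].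
  by rewrite Pi0 geq_minl.
case: (P a); last exact: IH.
by apply: leq_trans (geq_minr _ _) (IH ir).
Qed.

Section Proof.
Variables (T : finType) (e : rel T).
Hypotheses (e_sym : symmetric e) (e_irr : irreflexive e).

Lemma domP (D : {set T}) v : reflect (exists2 u, u \in D & (u == v) || e v u) (dominated e D v).
Proof.
apply: (iffP existsP) => [[u /andP[uD]]|[u uD h]].
  by rewrite inE => h; exists u.
by exists u; rewrite uD inE.
Qed.

Lemma indepP S : is_independent e S -> forall x y, x \in S -> y \in S -> ~~ e x y.
Proof.
move=> /forallP H x y xS yS.
by move: (H x) => /implyP/(_ xS)/forallP/(_ y)/implyP/(_ yS).
Qed.

Lemma cliqueP K : is_clique e K -> forall x y, x \in K -> y \in K -> x != y -> e x y.
Proof.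
move=> /forallP H x y xS yS.
by move: (H x) => /implyP/(_ xS)/forallP/(_ y)/implyP/(_ yS)/implyP.
Qed.

Lemma game_dom n D : dominating e D -> game_value e n D = #|D|.
Proof. by case: n => //= n ->. Qed.

Lemma lower S : is_independent e S ->
  (forall x, exists2 s, s \in S & (s == x) || e x s) ->
  forall n (D : {set T}), D \subset S -> #|S| - #|D| <= n -> #|S| <= game_value e n D.
Proof.
move=> indS maxS; elim=> [|n IH] D DS hn /=.
  lia.
case: ifP => domD.
  apply: subset_leq_card; apply/subsetP => s sS.
  move: domD => /forallP/(_ s)/domP[u uD /orP[/eqP <- //|esu]].
  by move: (indepP indS sS (subsetP DS u uD)); rewrite esu.
apply: (big_ind (fun x => #|S| <= x)).
- exact: max_card.
- by move=> x y; rewrite leq_min => -> ->.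
move=> v vnd.
have [s sS hs] := maxS v.
have sD : s \notin D.
  by apply/negP => sD; move/negP: vnd; apply; apply/domP; exists s.
have sN : s \in cnbhd e v by rewrite inE.
apply: leq_trans (leq_bigmax_cond _ sN).
apply: IH.
  by rewrite subUset sub1set sS DS.
rewrite cardsU1 sD add1n; move: hn; clear; lia.
Qed.

Lemma upper K I : K :|: I = setT -> K :&: I = set0 -> is_clique e K ->
  is_independent e I -> forall n (D : {set T}),
  #|D| <= #|I :&: [set x | dominated e D x]| -> game_value e n D <= alpha e.
Proof.
move=> KI KI0 clK indI.
have hI : #|I| <= alpha e by exact: (@leq_bigmax_cond _ (fun S => is_independent e S) (fun S => #|S|) I indI).
have hD : forall D : {set T}, #|D| <= #|I :&: [set x | dominated e D x]| -> #|D| <= alpha e.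
  move=> D h; apply: (leq_trans h); apply: (leq_trans _ hI).
  by apply: subset_leq_card; apply: subsetIl.
have inKI : forall x, x \notin I -> x \in K.
  move=> x xI; have : x \in K :|: I by rewrite KI inE.
  by rewrite inE (negbTE xI) orbF.
have notKI : forall x, x \in I -> x \notin K.
  move=> x xI; apply/negP => xK.
  have : x \in K :&: I by rewrite inE xK xI.
  by rewrite KI0 inE.
elim=> [|n IH] D inv /=; first exact: hD.
case: ifP => domD; first exact: hD.
case: (pickP [pred v in I | ~~ dominated e D v]) => [v /andP[vI vnd] | allI].
  apply: leq_trans (@bigmin_le _ (fun x => ~~ dominated e D x) _ _ _ vnd) _.
  apply/bigmax_leqP => u uN; apply: IH.
  have uD : u \notin D.
    by apply/negP => uD; move/negP: vnd; apply; apply/domP; exists u => //; rewrite inE in uN.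
  rewrite cardsU1 uD add1n; move: inv => inv.
  have h1 : #|D| < #|v |: (I :&: [set x | dominated e D x])|.
    by rewrite cardsU1 !inE (negbTE vnd) andbF add1n ltnS.
  apply: (leq_trans h1).
  apply: subset_leq_card; apply/subsetP => x; rewrite !inE.
  case/orP => [/eqP -> | /andP[xI /domP[y yD hy]]].
    rewrite vI /=; apply/domP; exists u; first by rewrite setU11.
    by move: uN; rewrite inE.
  by rewrite xI /=; apply/domP; exists y; rewrite // inE yD orbT.
move: domD => /negbT/forallPn[w wnd].
have wI : w \notin I.
  by apply/negP => wI; move: (allI w); rewrite /= wI wnd.
have wK := inKI w wI.
apply: leq_trans (@bigmin_le _ (fun x => ~~ dominated e D x) _ _ _ wnd) _.
apply/bigmax_leqP => u uN.
have wD : w \notin D.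
  by apply/negP => wD; move/negP: wnd; apply; apply/domP; exists w; rewrite ?eqxx.
have DI : D \subset I.
  apply/subsetP => k kD; apply/negPn/negP => kI.
  have kK := inKI k kI.
  have kw : k != w by apply/negP => /eqP kw; rewrite -kw kD in wD.
  move/negP: wnd; apply; apply/domP; exists k => //.
  by rewrite e_sym (cliqueP clK kK wK kw) orbT.
have ID : I \subset D.
  apply/subsetP => i iI.
  have : dominated e D i by move: (allI i); rewrite /= iI => /negbFE.
  case/domP => y yD /orP[/eqP <- //|eiy].
  by move: (indepP indI iI (subsetP DI y yD)); rewrite eiy.
have DeqI : D = I by apply/eqP; rewrite eqEsubset DI ID.
have wnI : forall i, i \in I -> ~~ e w i.
  move=> i iI; apply/negP => ewi; move/negP: wnd; apply; apply/domP.
  by exists i; rewrite ?DeqI ?ewi ?orbT.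
have uK : u \in K.
  move: uN; rewrite inE => /orP[/eqP -> //|ewu].
  apply: inKI; apply/negP => uI; by move: (wnI u uI); rewrite ewu.
have uD : u \notin D by rewrite DeqI; apply/negP => uI; move: (notKI u uI); rewrite uK.
rewrite game_dom; last first.
  apply/forallP => x; apply/domP.
  case: (boolP (x \in I)) => xI.
    by exists x; rewrite ?eqxx // inE DeqI xI orbT.
  have xK := inKI x xI.
  exists u; first by rewrite setU11.
  case: (eqVneq u x) => [-> | ux]; first by apply/orP; left.
  by rewrite (cliqueP clK xK uK) ?orbT // eq_sym.
rewrite cardsU1 uD DeqI add1n.
have : #|w |: I| <= alpha e.
  apply: (@leq_bigmax_cond _ (fun S => is_independent e S) (fun S => #|S|) (w |: I)).
  apply/forallP => x; apply/implyP => xS; apply/forallP => y; apply/implyP => yS.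
  move: xS yS; rewrite !inE => /orP[/eqP -> | xI] /orP[/eqP -> | yI].
  - by rewrite e_irr.
  - exact: wnI.
  - by rewrite e_sym; apply: wnI.
  - exact: indepP indI x y xI yI.
by rewrite cardsU1 wI.
Qed.

End Proof.

Theorem proposition5p1 (T : finType) (e : rel T)
  (e_sym : symmetric e) (e_irr : irreflexive e) :
  is_split e -> gamma_i e = alpha e.
Proof.
case=> K [I] [KI KI0 clK indI].
apply/eqP; rewrite eqn_leq; apply/andP; split.
  apply: (upper e_sym e_irr KI KI0 clK indI).
  by rewrite cards0.
have P0 : 0 < #|[pred S : {set T} | is_independent e S]|.
  apply/card_gt0P; exists set0; rewrite inE.
  by apply/forallP => x; rewrite inE.
have [S indS hS] := eq_bigmax_cond (fun S : {set T} => #|S|) P0.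
rewrite /alpha hS.
apply: (lower indS); last by rewrite cards0 subn0 max_card.
- move=> x; case: (pickP [pred s in S | (s == x) || e x s]) => [s /andP[sS hs]|none].
    by exists s.
  exfalso.
  have xS : x \notin S by apply/negP => xS; move: (none x); rewrite /= xS eqxx.
  have nb : forall s, s \in S -> ~~ e x s.
    by move=> s sS; move: (none s); rewrite /= sS => /norP[].
  have : #|x |: S| <= \max_(S | is_independent e S) #|S|.
    apply: (@leq_bigmax_cond _ (fun S => is_independent e S) (fun S => #|S|) (x |: S)).
    apply/forallP => a; apply/implyP => aS; apply/forallP => b; apply/implyP => bS.
    move: aS bS; rewrite !inE => /orP[/eqP -> | aI] /orP[/eqP -> | bI].
    + by rewrite e_irr.
    + exact: nb.
    + by rewrite e_sym; apply: nb.
    + exact: indepP indS a b aI bI.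
  by rewrite hS cardsU1 xS ltnn.
- exact: sub0set.
Qed.
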